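(* Let $r_0$ solve $r_0'=r_0\mathcal N(r_0^2)$, $r_0(0)=\frac12$, and set $\mathcal N_0=\mathcal N(r_0^2)$ and $\mathcal N_p=\mathcal N'(r_0^2)r_0^2$. Define the real potential $$\mathcal V(x)=\big[\mathcal N_0(x)+\mathcal N_p(x)\big]_x+\big[\mathcal N_0(x)+\mathcal N_p(x)\big]^2.$$ Assume $\lambda\in\mathbb C$ and $0\ne B=(U,V)\in L^2(\mathbb R;\mathbb C^2)$ satisfy $$U_x=(\mathcal N_0+\mathcal N_p)U+\lambda V,\qquad V_x=\lambda U-(\mathcal N_0+\mathcal N_p)V.$$ Then: (i) $-\lambda^2\in\mathbb R$, and $(\mathcal E,U)=(-\lambda^2,U)$, with $0\ne U\in L^2$, is an eigenpair of $-\partial_x^2+\mathcal V(x)$, i.e. $(-\partial_x^2+\mathcal V)U=\mathcal EU$. (ii) $\mathcal E=0$ is the ground state energy (lowest eigenvalue) of $-\partial_x^2+\mathcal V(x)$.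
   Context: Nonlinearity: $\mathcal N:[0,\infty)\to\mathbb R$ is smooth, $\mathcal N'(s)<0$ for $s>0$, $\mathcal N(0)=1$, $\mathcal N(1)=0$, $\lim_{s\to\infty}\mathcal N(s)\in[-\infty,0)$, and $K:=-\mathcal N'(1)>0$. The function $r_0$ increases from $0$ at $-\infty$ to $1$ at $+\infty$. *)

(* Defs.v *)
From Stdlib Require Import Reals.
From Coquelicot Require Import Coquelicot.
Open Scope R_scope.

(* N is smooth on [0, +oo): all derivatives exist on (0,+oo) and each extends
   continuously to 0 from the right (N itself is right-continuous at 0). *)
Definition smooth_on_nonneg (N : R -> R) : Prop :=
  (forall n x, 0 < x -> ex_derive_n N n x) /\
  filterlim N (at_right 0) (locally (N 0)) /\
  (forall n, exists l : R, filterlim (Derive_n N n) (at_right 0) (locally l)).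

Definition nonlinearity (N : R -> R) : Prop :=
  smooth_on_nonneg N /\
  (forall s, 0 < s -> Derive N s < 0) /\
  N 0 = 1 /\ N 1 = 0 /\
  (exists l : Rbar, is_lim N p_infty l /\ Rbar_lt l 0) /\
  0 < - Derive N 1.

Definition Wpot (N r0 : R -> R) (x : R) : R :=
  N (r0 x ^ 2) + Derive N (r0 x ^ 2) * r0 x ^ 2.

Definition Vpot (N r0 : R -> R) (x : R) : R :=
  Derive (Wpot N r0) x + (Wpot N r0 x) ^ 2.

Definition L2C (f : R -> C) : Prop :=
  ex_RInt_gen (fun x => Cmod (f x) ^ 2) (Rbar_locally m_infty) (Rbar_locally p_infty).

Definition eigenpair (N r0 : R -> R) (E : C) (phi : R -> C) : Prop :=
  L2C phi /\ (exists x, phi x <> 0%C) /\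
  exists dphi : R -> C,
    forall x, is_derive phi x (dphi x) /\
              is_derive dphi x ((RtoC (Vpot N r0 x) - E) * phi x)%C.

(* Main.v *)
Require Import Defs.
From Stdlib Require Import Reals.
From Coquelicot Require Import Coquelicot.
From Stdlib Require Import Lra Classical.
Open Scope R_scope.


Lemma is_derive_eq (f : R -> R) (x l l' : R) : is_derive f x l -> @eq R l l' -> is_derive f x l'.
Proof. intros H ->; exact H. Qed.

Lemma ball_R (x e y : R) : ball x e y <-> Rabs (y - x) < e.
Proof. unfold ball; simpl; unfold AbsRing_ball, abs, minus, plus, opp; simpl. tauto. Qed.

Lemma der_cont (f df : R -> R) : (forall x, is_derive f x (df x)) -> forall x, continuous f x.
Proof. intros H x. apply (ex_derive_continuous (K:=R_AbsRing) (V:=R_NormedModule)). eexists; apply H. Qed.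

Lemma cont_eps (f : R -> R) x : continuous f x ->
  forall eps, 0 < eps -> exists d, 0 < d /\ forall y, Rabs (y - x) < d -> Rabs (f y - f x) < eps.
Proof.
  intros Hc eps Heps.
  destruct (proj1 (filterlim_locally f (f x)) Hc (mkposreal eps Heps)) as [d Hd].
  exists d; split; [apply cond_pos|]. intros y Hy.
  apply ball_R. apply Hd. apply ball_R. exact Hy.
Qed.

Lemma mono_le (f df : R -> R) a b : a <= b ->
  (forall x, a <= x <= b -> is_derive f x (df x)) ->
  (forall x, a <= x <= b -> 0 <= df x) -> f a <= f b.
Proof.
  intros Hab Hd Hp.
  destruct (MVT_gen f a b df) as [c [Hc Heq]].
  - intros x Hx. apply Hd. rewrite Rmin_left in Hx by lra. rewrite Rmax_right in Hx by lra. lra.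
  - intros x Hx. rewrite Rmin_left in Hx by lra. rewrite Rmax_right in Hx by lra.
    apply continuity_pt_filterlim. apply (ex_derive_continuous (K:=R_AbsRing) (V:=R_NormedModule)). eexists; apply Hd; lra.
  - rewrite Rmin_left in Hc by lra. rewrite Rmax_right in Hc by lra.
    assert (0 <= df c * (b - a)) by (apply Rmult_le_pos; [apply Hp; lra | lra]). lra.
Qed.

Lemma comp_le (f df g dg : R -> R) a b : a <= b ->
  (forall x, a <= x <= b -> is_derive f x (df x)) ->
  (forall x, a <= x <= b -> is_derive g x (dg x)) ->
  (forall x, a <= x <= b -> df x <= dg x) -> f b - f a <= g b - g a.
Proof.
  intros Hab Hf Hg Hle.
  assert (H : (fun x => g x - f x) a <= (fun x => g x - f x) b).
  { apply (mono_le (fun x => g x - f x) (fun x => dg x - df x) a b Hab).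
    - intros x Hx. apply (is_derive_minus g f x (dg x) (df x)); auto.
    - intros x Hx. specialize (Hle x Hx). lra. }
  simpl in H. lra.
Qed.

Lemma const_der0 (f : R -> R) : (forall x, is_derive f x 0) -> forall x y, f x = f y.
Proof.
  intros H.
  assert (forall x y, x <= y -> f x = f y).
  { intros x y Hxy.
    pose proof (mono_le f (fun _ => 0) x y Hxy (fun t _ => H t) (fun _ _ => Rle_refl 0)).
    pose proof (mono_le (fun t => - f t) (fun _ => 0) x y Hxy).
    assert (- f x <= - f y).
    { apply H1. intros t _. apply (is_derive_eq _ _ (opp 0)). apply (is_derive_opp f t 0). apply H.
      unfold opp; simpl; lra. intros; lra. }
    lra. }
  intros x y. destruct (Rle_dec x y). auto. symmetry; apply H0; lra.
Qed.

Lemma exRc (f : R -> R) a b : (forall x, continuous f x) -> ex_RInt f a b.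
Proof. intros H. apply (ex_RInt_continuous (V:=R_CompleteNormedModule)). intros; apply H. Qed.

Lemma antider (f : R -> R) : (forall x, continuous f x) ->
  exists S, (forall x, is_derive S x (f x)) /\ (forall a b, S b - S a = RInt f a b).
Proof.
  intros Hc. exists (fun x => RInt f 0 x). split.
  - intros x. apply (is_derive_RInt f (fun b => RInt f 0 b) 0 x).
    + exists (mkposreal 1 Rlt_0_1). intros y _. apply (RInt_correct (V:=R_CompleteNormedModule)).
      apply ex_RInt_continuous. intros; auto.
    + auto.
  - intros a b.
    assert (Ha : ex_RInt f 0 a) by (apply exRc; auto).
    assert (Hb : ex_RInt f a b) by (apply exRc; auto).
    rewrite <- (RInt_Chasles f 0 a b Ha Hb). unfold plus; simpl. ring.
Qed.

Lemma is_derive_lin (k x : R) : is_derive (fun t => k * t) x k.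
Proof.
  apply (is_derive_eq _ _ (k * 1)). apply is_derive_scal. apply (is_derive_id (K:=R_AbsRing)). 
  apply Rmult_1_r.
Qed.

Lemma abs_le_inv a b : Rabs a <= b -> -b <= a /\ a <= b.
Proof. intros H. pose proof (Rle_abs a). pose proof (Rle_abs (-a)). rewrite Rabs_Ropp in H1. lra. Qed.

Lemma prod_der (f g : R -> R) x df dg : is_derive f x df -> is_derive g x dg ->
  is_derive (fun t => f t * g t) x (df * g x + f x * dg).
Proof.
  intros Hf Hg. pose proof (is_derive_mult (K:=R_AbsRing) f g x df dg Hf Hg) as H.
  apply H. intros; apply Rmult_comm.
Qed.

Lemma sum_der (f g : R -> R) x df dg : is_derive f x df -> is_derive g x dg ->
  is_derive (fun t => f t + g t) x (df + dg).
Proof. intros Hf Hg. apply (is_derive_plus (K:=R_AbsRing) f g x df dg Hf Hg). Qed.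

Lemma diff_der (f g : R -> R) x df dg : is_derive f x df -> is_derive g x dg ->
  is_derive (fun t => f t - g t) x (df - dg).
Proof. intros Hf Hg. apply (is_derive_minus (K:=R_AbsRing) f g x df dg Hf Hg). Qed.

Lemma der_opp_arg (f df : R -> R) : (forall y, is_derive f y (df y)) ->
  forall t, is_derive (fun t => f (-t)) t (- df (-t)).
Proof.
  intros H t. pose proof (is_derive_comp f (fun t => - t) t (df (-t)) (-1) (H (-t))) as H'.
  assert (Hm : is_derive (fun t : R => - t) t (-1)).
  { apply (is_derive_eq _ _ (opp 1)). apply (is_derive_opp (fun t : R => t) t 1 (is_derive_id t)).
    unfold opp; simpl; reflexivity. }
  apply (is_derive_eq _ _ _ _ (H' Hm)).
  unfold scal; simpl; unfold mult; simpl; ring.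
Qed.

Lemma exp_lin_der (k x : R) : is_derive (fun t => exp (k * t)) x (k * exp (k * x)).
Proof.
  pose proof (is_derive_comp exp (fun t => k * t) x (exp (k * x)) k (is_derive_exp _) (is_derive_lin k x)) as H.
  apply (is_derive_eq _ _ _ _ H). unfold scal; simpl; unfold mult; simpl; ring.
Qed.

Lemma neg_der (f : R -> R) x l : is_derive f x l -> is_derive (fun t => - f t) x (- l).
Proof. intros H. apply (is_derive_opp (K:=R_AbsRing) (V:=R_NormedModule) f x l H). Qed.

Lemma const_der (c x : R) : is_derive (fun _ => c) x 0.
Proof. apply (is_derive_const (K:=R_AbsRing) (V:=R_NormedModule) c x). Qed.
Lemma is_derive_C_split (f : R -> C) x (l : C) :
  is_derive (fun t => fst (f t)) x (fst l) ->
  is_derive (fun t => snd (f t)) x (snd l) -> is_derive f x l.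
Proof.
  intros H1 H2.
  unfold is_derive in *.
  assert (Hl : is_linear (fun t : R_NormedModule * R_NormedModule => (fst t, snd t))).
  { apply (is_linear_prod (K:=R_AbsRing)); [apply is_linear_fst | apply is_linear_snd]. }
  pose proof (filterdiff_comp'_2 (K:=R_AbsRing) (fun t => fst (f t)) (fun t => snd (f t))
    (fun a b => (a,b)) x _ _ (fun a b => (a,b)) H1 H2 (filterdiff_linear _ Hl)) as H.
  eapply filterdiff_ext. 2: eapply filterdiff_ext_lin. 2: exact H.
  - intros y; simpl; destruct (f y); reflexivity.
  - intros y; destruct l; reflexivity.
Qed.

Lemma is_derive_C_fst (f : R -> C) x (l : C) :
  is_derive f x l -> is_derive (fun t => fst (f t)) x (fst l).
Proof.
  intros H. unfold is_derive in *.
  pose proof (filterdiff_comp' (K:=R_AbsRing) f (fun t : R_NormedModule * R_NormedModule => fst t) x _ _ H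
     (filterdiff_linear _ is_linear_fst)) as H'.
  exact H'.
Qed.

Lemma is_derive_C_snd (f : R -> C) x (l : C) :
  is_derive f x l -> is_derive (fun t => snd (f t)) x (snd l).
Proof.
  intros H. unfold is_derive in *.
  pose proof (filterdiff_comp' (K:=R_AbsRing) f (fun t : R_NormedModule * R_NormedModule => snd t) x _ _ H
     (filterdiff_linear _ is_linear_snd)) as H'.
  exact H'.
Qed.


Lemma nlb_right (S f : R -> R) X0 L eps :
  (forall x, is_derive S x (f x)) -> (forall a b, X0 <= a <= b -> S b - S a <= L) -> 0 < eps ->
  forall X, exists x, X <= x /\ f x < eps.
Proof.
  intros HS HL He X. apply NNPP; intros Hn.
  assert (Hge : forall x, X <= x -> eps <= f x).
  { intros x Hx. apply Rnot_lt_le. intros Hlt. apply Hn. exists x; auto. }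
  set (A := Rmax X X0). set (B := A + (Rabs L + 1) / eps).
  assert (HAB : A <= B). { unfold B. assert (0 < (Rabs L + 1)/eps). apply Rdiv_lt_0_compat. pose proof (Rabs_pos L); lra. lra. lra. }
  assert (H1 : eps * B - eps * A <= S B - S A).
  { apply (comp_le (fun t => eps * t) (fun _ => eps) S f A B HAB).
    - intros x _. apply is_derive_lin.
    - intros x _; auto.
    - intros x Hx. apply Hge. unfold A in Hx. pose proof (Rmax_l X X0). lra. }
  assert (H2 : S B - S A <= L). { apply HL. split; auto. apply Rmax_r. }
  assert (eps * B - eps * A = Rabs L + 1). { unfold B. field. lra. }
  pose proof (Rle_abs L). lra.
Qed.

Lemma nlb_left (S f : R -> R) X0 L eps :
  (forall x, is_derive S x (f x)) -> (forall a b, a <= b <= X0 -> S b - S a <= L) -> 0 < eps ->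
  forall X, exists x, x <= X /\ f x < eps.
Proof.
  intros HS HL He X. apply NNPP; intros Hn.
  assert (Hge : forall x, x <= X -> eps <= f x).
  { intros x Hx. apply Rnot_lt_le. intros Hlt. apply Hn. exists x; auto. }
  set (B := Rmin X X0). set (A := B - (Rabs L + 1) / eps).
  assert (HAB : A <= B). { unfold A. assert (0 < (Rabs L + 1)/eps). apply Rdiv_lt_0_compat. pose proof (Rabs_pos L); lra. lra. lra. }
  assert (H1 : eps * B - eps * A <= S B - S A).
  { apply (comp_le (fun t => eps * t) (fun _ => eps) S f A B HAB).
    - intros x _. apply is_derive_lin.
    - intros x _; auto.
    - intros x Hx. apply Hge. unfold B in Hx. pose proof (Rmin_l X X0). lra. }
  assert (H2 : S B - S A <= L). { apply HL. split; auto. apply Rmin_r. }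
  assert (eps * B - eps * A = Rabs L + 1). { unfold A. field. lra. }
  pose proof (Rle_abs L). lra.
Qed.

Lemma nonneg_mono (S f : R -> R) : (forall x, is_derive S x (f x)) -> (forall x, 0 <= f x) ->
  forall a b, a <= b -> S a <= S b.
Proof. intros HS Hf a b Hab. apply (mono_le S f a b Hab); auto. Qed.

Lemma pos_interval (S f : R -> R) x0 : (forall x, is_derive S x (f x)) -> (forall x, 0 <= f x) ->
  continuous f x0 -> 0 < f x0 ->
  exists a b d, 0 < d /\ forall y x, y <= a -> b <= x -> d <= S x - S y.
Proof.
  intros HS Hf Hc Hp.
  destruct (cont_eps f x0 Hc (f x0 / 2)) as [e [He Hd]]. lra.
  exists (x0 - e/2), (x0 + e/2), (f x0 / 2 * e). split. apply Rmult_lt_0_compat; lra.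
  intros y x Hy Hx.
  assert (H1 : (f x0 / 2) * (x0 + e/2) - (f x0/2) * (x0 - e/2) <= S (x0 + e/2) - S (x0 - e/2)).
  { apply (comp_le (fun t => f x0 / 2 * t) (fun _ => f x0 / 2) S f). lra.
    - intros t _. apply is_derive_lin.
    - intros; auto.
    - intros t Ht. assert (Rabs (t - x0) < e) by (apply Rabs_def1; lra).
      specialize (Hd t H). apply Rabs_def2 in Hd. lra. }
  pose proof (nonneg_mono S f HS Hf y (x0 - e/2) Hy).
  pose proof (nonneg_mono S f HS Hf (x0 + e/2) x Hx). nra.
Qed.

Lemma squeeze (S f g Rf dR : R -> R) x0 C c :
  (forall x, is_derive S x (f x)) -> (forall x, 0 <= f x) -> continuous f x0 -> 0 < f x0 ->
  (forall eps, 0 < eps -> forall X, exists x, X <= x /\ g x < eps) ->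
  (forall eps, 0 < eps -> forall X, exists x, x <= X /\ g x < eps) ->
  0 <= C -> (forall x, Rabs (Rf x) <= C * g x) ->
  (forall x, is_derive Rf x (dR x)) -> (forall x, dR x <= c * f x) -> 0 <= c.
Proof.
  intros HS Hf Hc Hp Hr Hl HC HR HdR Hle.
  apply Rnot_lt_le; intros Hneg.
  destruct (pos_interval S f x0 HS Hf Hc Hp) as [a [b [d [Hd Hab]]]].
  set (eps := - c * d / (2 * (C + 1))).
  assert (Heps : 0 < eps). { unfold eps. apply Rdiv_lt_0_compat. nra. lra. }
  destruct (Hr eps Heps b) as [x [Hx Hgx]].
  destruct (Hl eps Heps a) as [y [Hy Hgy]].
  assert (Hyx : y <= x). { pose proof (Hab y x Hy Hx). pose proof (nonneg_mono S f HS Hf). 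
     destruct (Rle_dec y x); auto. assert (S x <= S y) by (apply H0; lra). lra. }
  assert (H1 : Rf x - Rf y <= c * S x - c * S y).
  { apply (comp_le Rf dR (fun t => c * S t) (fun t => c * f t) y x Hyx); auto.
    intros t _. apply is_derive_scal. auto. }
  pose proof (Hab y x Hy Hx).
  pose proof (HR x). pose proof (HR y).
  apply abs_le_inv in H0. apply abs_le_inv in H2.
  assert (C * g x <= C * eps) by (apply Rmult_le_compat_l; lra).
  assert (C * g y <= C * eps) by (apply Rmult_le_compat_l; lra).
  assert (Hk : 2 * C * eps < - c * d).
  { unfold eps. apply (Rmult_lt_reg_r (C+1)). lra. field_simplify. nra. lra. }
  nra.
Qed.


Lemma L2_bound (f : R -> R) : (forall x, continuous f x) -> (forall x, 0 <= f x) ->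
  ex_RInt_gen f (Rbar_locally m_infty) (Rbar_locally p_infty) ->
  exists L, forall a b, a <= b -> RInt f a b <= L.
Proof.
  intros Hc Hp [l Hl].
  unfold is_RInt_gen, filterlimi, filter_le, filtermapi in Hl.
  specialize (Hl _ (locally_ball l (mkposreal 1 Rlt_0_1))).
  destruct Hl as [Q R0 [M1 HQ] [M2 HR] Himp].
  exists (l + 1). intros a b Hab.
  set (a' := Rmin a (M1 - 1)). set (b' := Rmax b (M2 + 1)).
  destruct (Himp a' b') as [y [Hy Hb]].
  { apply HQ. unfold a'. pose proof (Rmin_r a (M1 - 1)). lra. }
  { apply HR. unfold b'. pose proof (Rmax_r b (M2 + 1)). lra. }
  simpl in Hy, Hb. assert (Hb2 : Rabs (y - l) < 1) by (apply ball_R; exact Hb).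
  apply (is_RInt_unique (V:=R_CompleteNormedModule)) in Hy.
  assert (Ha' : a' <= a) by apply Rmin_l.
  assert (Hb' : b <= b') by apply Rmax_l.
  assert (E1 : RInt f a' b = RInt f a' a + RInt f a b).
  { symmetry. apply (RInt_Chasles (V:=R_CompleteNormedModule)); apply exRc; auto. }
  assert (E2 : RInt f a' b' = RInt f a' b + RInt f b b').
  { symmetry. apply (RInt_Chasles (V:=R_CompleteNormedModule)); apply exRc; auto. }
  assert (0 <= RInt f a' a) by (apply RInt_ge_0; auto; apply exRc; auto).
  assert (0 <= RInt f b b') by (apply RInt_ge_0; auto; apply exRc; auto).
  assert (Rabs (y - l) <= 1) by lra. apply abs_le_inv in H1. lra.
Qed.

Lemma first_zero (f : R -> R) a b : (forall x, continuous f x) -> a <= b -> 0 < f a -> f b <= 0 ->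
  exists c, a < c <= b /\ f c = 0 /\ forall t, a <= t < c -> 0 < f t.
Proof.
  intros Hc Hab Ha Hb.
  set (E := fun t => a <= t <= b /\ forall y, a <= y <= t -> 0 < f y).
  assert (HEb : bound E). { exists b. intros t [Ht _]. lra. }
  assert (HEa : exists x, E x). { exists a. split. lra. intros y Hy. replace y with a by lra. auto. }
  destruct (completeness E HEb HEa) as [c [Hub Hlub]].
  assert (Hcb : c <= b). { apply Hlub. intros t [Ht _]. lra. }
  assert (Hac : a <= c). { apply Hub. destruct HEa; unfold E. split. lra. intros y Hy. replace y with a by lra; auto. }
  assert (Hbelow : forall t, a <= t < c -> 0 < f t).
  { intros t Ht. apply NNPP. intros Hn.
    assert (c <= t). { apply Hlub. intros e [He1 He2]. destruct (Rle_dec e t); auto.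
      exfalso. apply Hn. apply He2. lra. }
    lra. }
  assert (Hab' : a < b). { destruct (Req_dec a b). subst. lra. lra. }
  assert (Hca : a < c).
  { destruct (cont_eps f a (Hc a) (f a) Ha) as [d [Hd Hfd]].
    assert (E (Rmin (a + d/2) b)).
    { split. split. apply Rmin_glb; lra. apply Rmin_r.
      intros y Hy. pose proof (Rmin_l (a + d/2) b). 
      assert (Rabs (y - a) < d) by (apply Rabs_def1; lra).
      specialize (Hfd y H0). apply Rabs_def2 in Hfd. lra. }
    apply Hub in H. assert (a < Rmin (a + d/2) b) by (apply Rmin_glb_lt; lra). lra. }
  exists c. split. lra. split; auto.
  destruct (Rtotal_order (f c) 0) as [Hlt | [Heq | Hgt]]; auto.
  - exfalso. destruct (cont_eps f c (Hc c) (- f c)) as [d [Hd Hfd]]. lra.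
    set (t := Rmax a (c - d/2)).
    assert (a <= t < c). { unfold t. split. apply Rmax_l. apply Rmax_lub_lt; lra. }
    assert (Rabs (t - c) < d). { destruct H. pose proof (Rmax_r a (c - d/2)). fold t in H1. apply Rabs_def1; lra. }
    specialize (Hfd t H0). apply Rabs_def2 in Hfd. specialize (Hbelow t H). lra.
  - exfalso. destruct (Req_dec c b). subst c. lra.
    destruct (cont_eps f c (Hc c) (f c) Hgt) as [d [Hd Hfd]].
    assert (E (Rmin (c + d/2) b)).
    { split. split. pose proof (Rmin_glb (c + d/2) b c). assert (c <= Rmin (c + d/2) b) by (apply Rmin_glb; lra). lra. apply Rmin_r.
      intros y Hy. destruct (Rlt_dec y c). apply Hbelow; lra.
      pose proof (Rmin_l (c + d/2) b). 
      assert (Rabs (y - c) < d) by (apply Rabs_def1; lra).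
      specialize (Hfd y H1). apply Rabs_def2 in Hfd. lra. }
    apply Hub in H0. assert (c < Rmin (c + d/2) b) by (apply Rmin_glb_lt; lra). lra.
Qed.


Lemma mono_lim_p (f : R -> R) B : (forall x y, x <= y -> f x <= f y) -> (forall x, f x <= B) ->
  exists l, filterlim f (Rbar_locally p_infty) (locally l).
Proof.
  intros Hm HB.
  set (E := fun y => exists x, y = f x).
  assert (HEb : bound E). { exists B. intros y [x ->]. auto. }
  assert (HEa : exists y, E y). { exists (f 0), 0. reflexivity. }
  destruct (completeness E HEb HEa) as [l [Hub Hlub]].
  exists l. apply filterlim_locally. intros eps.
  assert (Hx0 : exists x0, l - eps < f x0).
  { apply NNPP; intros Hn. assert (l <= l - eps).
    { apply Hlub. intros y [x ->]. apply Rnot_lt_le. intros Hlt. apply Hn. exists x; auto. }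
    pose proof (cond_pos eps). lra. }
  destruct Hx0 as [x0 Hx0]. exists x0. intros x Hx. apply ball_R.
  assert (f x <= l) by (apply Hub; exists x; auto).
  pose proof (Hm x0 x (Rlt_le _ _ Hx)).
  apply Rabs_def1; pose proof (cond_pos eps); lra.
Qed.

Lemma mono_lim_m (f : R -> R) B : (forall x y, x <= y -> f x <= f y) -> (forall x, B <= f x) ->
  exists l, filterlim f (Rbar_locally m_infty) (locally l).
Proof.
  intros Hm HB.
  set (E := fun y => exists x, y = - f x).
  assert (HEb : bound E). { exists (-B). intros y [x ->]. specialize (HB x). lra. }
  assert (HEa : exists y, E y). { exists (- f 0), 0. reflexivity. }
  destruct (completeness E HEb HEa) as [l [Hub Hlub]].
  exists (-l). apply filterlim_locally. intros eps.
  assert (Hx0 : exists x0, l - eps < - f x0).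
  { apply NNPP; intros Hn. assert (l <= l - eps).
    { apply Hlub. intros y [x ->]. apply Rnot_lt_le. intros Hlt. apply Hn. exists x; auto. }
    pose proof (cond_pos eps). lra. }
  destruct Hx0 as [x0 Hx0]. exists x0. intros x Hx. apply ball_R.
  assert (- f x <= l) by (apply Hub; exists x; auto).
  pose proof (Hm x x0 (Rlt_le _ _ Hx)).
  apply Rabs_def1; pose proof (cond_pos eps); lra.
Qed.

Lemma cont_pt (f : R -> R) x : continuous f x -> continuity_pt f x.
Proof. intros H. apply continuity_pt_filterlim. exact H. Qed.

Lemma bounded_near0 (f : R -> R) l : (forall x, 0 < x -> continuous f x) ->
  filterlim f (at_right 0) (locally l) -> exists M, 0 <= M /\ forall x, 0 < x <= 1 -> Rabs (f x) <= M.
Proof.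
  intros Hc Hl.
  destruct (proj1 (filterlim_locally f l) Hl (mkposreal 1 Rlt_0_1)) as [d Hd].
  set (d' := Rmin (d/2) 1).
  assert (Hd'p : 0 < d'). { unfold d'. apply Rmin_glb_lt. pose proof (cond_pos d). lra. lra. }
  assert (Hd'1 : d' <= 1) by apply Rmin_r.
  assert (Hd'd : d' < d). { unfold d'. pose proof (Rmin_l (d/2) 1). pose proof (cond_pos d). lra. }
  destruct (continuity_ab_maj f d' 1 Hd'1) as [Mx [HMx _]].
  { intros c Hc'. apply cont_pt. apply Hc. lra. }
  destruct (continuity_ab_min f d' 1 Hd'1) as [mx [Hmx _]].
  { intros c Hc'. apply cont_pt. apply Hc. lra. }
  exists (Rmax (Rabs l + 1) (Rmax (Rabs (f mx)) (Rabs (f Mx)))). split.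
  { apply (Rle_trans _ (Rabs l + 1)). pose proof (Rabs_pos l). lra. apply Rmax_l. }
  intros x Hx.
  destruct (Rlt_dec x d') as [Hlt | Hge].
  - assert (Hb : ball 0 d x) by (apply ball_R; apply Rabs_def1; lra).
    specialize (Hd x Hb (proj1 Hx)). simpl in Hd.
    assert (Rabs (f x - l) < 1) by (apply ball_R; exact Hd).
    apply (Rle_trans _ (Rabs l + 1)). 2: apply Rmax_l.
    replace (f x) with ((f x - l) + l) by ring. pose proof (Rabs_triang (f x - l) l). lra.
  - apply (Rle_trans _ (Rmax (Rabs (f mx)) (Rabs (f Mx)))). 2: apply Rmax_r.
    apply RmaxAbs. apply Hmx; lra. apply HMx; lra.
Qed.


Lemma N_der N x : nonlinearity N -> 0 < x -> is_derive N x (Derive N x).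
Proof.
  intros [[Hd _] _] Hx. apply Derive_correct. exact (Hd 1%nat x Hx).
Qed.

Lemma N1_der N x : nonlinearity N -> 0 < x -> is_derive (Derive N) x (Derive_n N 2 x).
Proof.
  intros [[Hd _] _] Hx. pose proof (Hd 2%nat x Hx) as H. simpl in H.
  apply Derive_correct in H. exact H.
Qed.

Lemma N2_der N x : nonlinearity N -> 0 < x -> is_derive (Derive_n N 2) x (Derive_n N 3 x).
Proof.
  intros [[Hd _] _] Hx. pose proof (Hd 3%nat x Hx) as H. simpl in H.
  apply Derive_correct in H. exact H.
Qed.

Lemma der_cont1 (f : R -> R) x l : is_derive f x l -> continuous f x.
Proof. intros H. apply (ex_derive_continuous (K:=R_AbsRing) (V:=R_NormedModule)). eexists; exact H. Qed.

Lemma N_mvt N a b : nonlinearity N -> 0 < a -> a <= b ->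
  exists c, a <= c <= b /\ N b - N a = Derive N c * (b - a).
Proof.
  intros HN Ha Hab.
  destruct (MVT_gen N a b (Derive N)) as [c [Hc Heq]].
  - intros x Hx. rewrite Rmin_left in Hx by lra. apply N_der; auto. lra.
  - intros x Hx. rewrite Rmin_left in Hx by lra. apply cont_pt. apply (der_cont1 _ _ _ (N_der N x HN ltac:(lra))).
  - rewrite Rmin_left in Hc by lra. rewrite Rmax_right in Hc by lra. exists c; auto.
Qed.

Lemma N_pos N s : nonlinearity N -> 0 <= s < 1 -> 0 < N s.
Proof.
  intros HN Hs. pose proof HN as [_ [Hneg [H0 [H1 _]]]].
  destruct (Req_dec s 0). subst; lra.
  destruct (N_mvt N s 1 HN) as [c [Hc Heq]]; try lra.
  assert (Derive N c < 0) by (apply Hneg; lra). rewrite H1 in Heq. nra.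
Qed.

Lemma N_le1 N s : nonlinearity N -> 0 <= s -> N s <= 1.
Proof.
  intros HN Hs. pose proof HN as [[_ [Hl _]] [Hneg [H0 [H1 _]]]].
  destruct (Req_dec s 0). subst; lra.
  apply Rnot_lt_le; intros Hgt.
  rewrite H0 in Hl.
  assert (Hep : 0 < N s - 1) by lra.
  destruct (proj1 (filterlim_locally N 1) Hl (mkposreal _ Hep)) as [d Hd].
  set (t := Rmin (s/2) (d/2)).
  assert (Ht : 0 < t). { unfold t. apply Rmin_glb_lt. lra. pose proof (cond_pos d); lra. }
  assert (Hts : t < s). { unfold t. pose proof (Rmin_l (s/2) (d/2)). lra. }
  assert (Htd : t < d). { unfold t. pose proof (Rmin_r (s/2) (d/2)). pose proof (cond_pos d). lra. }
  assert (Hb : ball 0 d t) by (apply ball_R; apply Rabs_def1; lra).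
  specialize (Hd t Hb Ht). assert (Rabs (N t - 1) < N s - 1) by (apply ball_R; exact Hd).
  apply Rabs_def2 in H2.
  destruct (N_mvt N t s HN) as [c [Hc Heq]]; try lra.
  assert (Derive N c < 0) by (apply Hneg; lra). nra.
Qed.

Lemma N_bound1 N : nonlinearity N -> exists C, 0 <= C /\ forall s, 0 < s <= 1 -> Rabs (Derive N s) <= C.
Proof.
  intros HN. pose proof HN as [[_ [_ Hl]] _].
  destruct (Hl 1%nat) as [l Hl1].
  apply (bounded_near0 _ l). intros x Hx. apply (der_cont1 _ _ _ (N1_der N x HN Hx)).
  exact Hl1.
Qed.

Lemma N_bound2 N : nonlinearity N -> exists C, 0 <= C /\ forall s, 0 < s <= 1 -> Rabs (Derive_n N 2 s) <= C.
Proof.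
  intros HN. pose proof HN as [[_ [_ Hl]] _].
  destruct (Hl 2%nat) as [l Hl1].
  apply (bounded_near0 _ l). intros x Hx. apply (der_cont1 _ _ _ (N2_der N x HN Hx)).
  exact Hl1.
Qed.

Lemma N_lip N : nonlinearity N -> exists C, 0 <= C /\ forall s, 0 < s <= 1 -> N s <= C * (1 - s).
Proof.
  intros HN. destruct (N_bound1 N HN) as [C [HC HB]]. exists C. split; auto.
  intros s Hs. pose proof HN as [_ [_ [_ [H1 _]]]].
  destruct (N_mvt N s 1 HN) as [c [Hc Heq]]; try lra.
  rewrite H1 in Heq. specialize (HB c ltac:(lra)). apply abs_le_inv in HB. nra.
Qed.


Lemma s_der N r0 : (forall x, is_derive r0 x (r0 x * N (r0 x ^ 2))) ->
  forall x, is_derive (fun t => r0 t ^ 2) x (2 * r0 x ^ 2 * N (r0 x ^ 2)).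
Proof.
  intros Hr x. apply (is_derive_eq _ _ _ _ (is_derive_pow r0 2 x _ (Hr x))). simpl. cbv beta; ring.
Qed.

Lemma s_pos_left N r0 : nonlinearity N -> (forall x, is_derive r0 x (r0 x * N (r0 x ^ 2))) ->
  r0 0 = 1/2 -> forall x, x <= 0 -> 0 < r0 x ^ 2.
Proof.
  intros HN Hr H0 x Hx.
  set (h := fun t => - (r0 t ^ 2 * exp (-2 * t))).
  assert (Hh : h x <= h 0).
  { apply (mono_le h (fun t => - (2 * r0 t ^ 2 * N (r0 t ^ 2) * exp (-2 * t) + r0 t ^ 2 * (-2 * exp (-2 * t))))); auto.
    - intros t _. unfold h. apply (neg_der (fun t => r0 t ^ 2 * exp (-2 * t))).
      eapply is_derive_eq. apply prod_der. apply s_der; auto. apply exp_lin_der. cbv beta; ring.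
    - intros t _. pose proof (N_le1 N (r0 t ^ 2) HN (pow2_ge_0 _)).
      pose proof (pow2_ge_0 (r0 t)). pose proof (exp_pos (-2 * t)).
      assert (0 <= r0 t ^ 2 * exp (-2 * t) * (1 - N (r0 t ^ 2))).
      { apply Rmult_le_pos. apply Rmult_le_pos; lra. lra. }
      nra. }
  unfold h in Hh. rewrite H0 in Hh. replace (-2 * 0) with 0 in Hh by ring. rewrite exp_0 in Hh.
  pose proof (exp_pos (-2 * x)). pose proof (pow2_ge_0 (r0 x)).
  destruct (Rle_lt_or_eq_dec 0 (r0 x ^ 2) H1) as [| He]; auto.
  rewrite <- He in Hh. lra.
Qed.

Lemma s_lt1_right N r0 : nonlinearity N -> (forall x, is_derive r0 x (r0 x * N (r0 x ^ 2))) ->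
  r0 0 = 1/2 -> forall x, 0 <= x -> r0 x ^ 2 < 1.
Proof.
  intros HN Hr H0 x1 Hx1. apply Rnot_le_lt. intros Hge.
  set (u := fun t => 1 - r0 t ^ 2).
  assert (Hu : forall t, is_derive u t (0 - 2 * r0 t ^ 2 * N (r0 t ^ 2))).
  { intros t. unfold u. eapply is_derive_eq. apply diff_der. apply const_der. apply s_der; auto. cbv beta; ring. }
  destruct (first_zero u 0 x1) as [c [Hc [Huc Hpos]]].
  { apply (der_cont _ _ Hu). } auto. { unfold u. rewrite H0. lra. } { unfold u. lra. }
  destruct (N_lip N HN) as [C [HC HL]].
  set (h := fun t => u t * exp (2 * C * t)).
  assert (Hh : h 0 <= h c).
  { apply (mono_le h (fun t => (0 - 2 * r0 t ^ 2 * N (r0 t ^ 2)) * exp (2 * C * t) + u t * (2 * C * exp (2 * C * t)))). lra.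
    - intros t _. unfold h. eapply is_derive_eq. apply prod_der. apply Hu. apply exp_lin_der. cbv beta; ring.
    - intros t Ht. pose proof (exp_pos (2 * C * t)). pose proof (pow2_ge_0 (r0 t)).
      assert (Hut : 0 <= u t). { destruct (Req_dec t c). subst; lra. apply Rlt_le, Hpos. lra. }
      unfold u in Hut |- *.
      assert (0 <= C * 2 * (1 - r0 t ^ 2) - 2 * r0 t ^ 2 * N (r0 t ^ 2)).
      { destruct (Rle_lt_or_eq_dec 0 (r0 t ^ 2) H1) as [Hsp | Hz]. 2: rewrite <- Hz; nra.
        specialize (HL (r0 t ^ 2) ltac:(lra)).
        assert (0 <= r0 t ^ 2 * (C * (1 - r0 t ^ 2) - N (r0 t ^ 2))) by (apply Rmult_le_pos; lra).
        assert (0 <= (1 - r0 t ^ 2) * (C * (1 - r0 t ^ 2))) by (apply Rmult_le_pos; [lra | apply Rmult_le_pos; lra]).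
        nra. }
      nra. }
  unfold h in Hh. rewrite Huc in Hh. unfold u in Hh. rewrite H0 in Hh.
  replace (2 * C * 0) with 0 in Hh by ring. rewrite exp_0 in Hh. lra.
Qed.

Lemma s_lt1_left N r0 : nonlinearity N -> (forall x, is_derive r0 x (r0 x * N (r0 x ^ 2))) ->
  r0 0 = 1/2 -> forall x, x <= 0 -> r0 x ^ 2 < 1.
Proof.
  intros HN Hr H0 x1 Hx1. apply Rnot_le_lt. intros Hge.
  pose proof HN as [_ [_ [_ [HN1 _]]]].
  set (g := fun t => 1 - r0 (-t) ^ 2).
  assert (Hg : forall t, is_derive g t (- (0 - 2 * r0 (-t) ^ 2 * N (r0 (-t) ^ 2)))).
  { apply (der_opp_arg (fun y => 1 - r0 y ^ 2) (fun y => 0 - 2 * r0 y ^ 2 * N (r0 y ^ 2))).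
    intros t. eapply is_derive_eq. apply diff_der. apply const_der. apply s_der; auto. cbv beta; ring. }
  destruct (first_zero g 0 (- x1)) as [c [Hc [Hgc Hpos]]].
  { apply (der_cont _ _ Hg). } lra. { unfold g. replace (-0) with 0 by ring. rewrite H0. lra. }
  { unfold g. rewrite Ropp_involutive. lra. }
  assert (Hm : r0 (-c) ^ 2 <= r0 0 ^ 2).
  { apply (mono_le (fun t => r0 t ^ 2) (fun t => 2 * r0 t ^ 2 * N (r0 t ^ 2))). lra.
    - intros t _. apply s_der; auto.
    - intros t Ht. pose proof (pow2_ge_0 (r0 t)).
      assert (Hs : r0 t ^ 2 <= 1).
      { destruct (Req_dec t (-c)). subst t. unfold g in Hgc. lra.
        specialize (Hpos (-t) ltac:(lra)). unfold g in Hpos. rewrite Ropp_involutive in Hpos. lra. }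
      assert (0 <= N (r0 t ^ 2)).
      { destruct (Req_dec (r0 t ^ 2) 1) as [E|E]. rewrite E, HN1. lra. apply Rlt_le, N_pos; auto. lra. }
      apply Rmult_le_pos; lra. }
  unfold g in Hgc. rewrite H0 in Hm. lra.
Qed.

Lemma s_range N r0 : nonlinearity N -> (forall x, is_derive r0 x (r0 x * N (r0 x ^ 2))) ->
  r0 0 = 1/2 -> forall x, 0 < r0 x ^ 2 < 1.
Proof.
  intros HN Hr H0 x.
  destruct (Rle_dec x 0).
  - split. apply s_pos_left with N; auto. apply s_lt1_left with N; auto.
  - split. 2: apply s_lt1_right with N; auto; lra.
    assert (r0 0 ^ 2 <= r0 x ^ 2).
    { apply (mono_le (fun t => r0 t ^ 2) (fun t => 2 * r0 t ^ 2 * N (r0 t ^ 2))). lra.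
      - intros t _. apply s_der; auto.
      - intros t Ht. pose proof (pow2_ge_0 (r0 t)).
        pose proof (s_lt1_right N r0 HN Hr H0 t ltac:(lra)).
        pose proof (N_pos N (r0 t ^ 2) HN ltac:(lra)). apply Rmult_le_pos; lra. }
    rewrite H0 in H. lra.
Qed.


Definition Wd (N r0 : R -> R) (x : R) : R :=
  2 * r0 x ^ 2 * N (r0 x ^ 2) * (2 * Derive N (r0 x ^ 2) + r0 x ^ 2 * Derive_n N 2 (r0 x ^ 2)).

Lemma comp_der (f g : R -> R) x df dg : is_derive f (g x) df -> is_derive g x dg ->
  is_derive (fun t => f (g t)) x (df * dg).
Proof.
  intros Hf Hg. eapply is_derive_eq. apply (is_derive_comp f g x df dg Hf Hg).
  unfold scal; simpl; unfold mult; simpl. ring.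
Qed.

Lemma W_der N r0 : nonlinearity N -> (forall x, is_derive r0 x (r0 x * N (r0 x ^ 2))) ->
  r0 0 = 1/2 -> forall x, is_derive (Wpot N r0) x (Wd N r0 x).
Proof.
  intros HN Hr H0 x. pose proof (s_range N r0 HN Hr H0 x) as Hs.
  pose proof (s_der N r0 Hr x) as Hsd.
  unfold Wpot, Wd. eapply is_derive_eq.
  apply sum_der. apply (comp_der N (fun t => r0 t ^ 2)). apply N_der; auto; lra. exact Hsd.
  apply prod_der. apply (comp_der (Derive N) (fun t => r0 t ^ 2)). apply N1_der; auto; lra. exact Hsd.
  exact Hsd. cbv beta. ring.
Qed.

Lemma Vpot_eq N r0 : nonlinearity N -> (forall x, is_derive r0 x (r0 x * N (r0 x ^ 2))) ->
  r0 0 = 1/2 -> forall x, Vpot N r0 x = Wd N r0 x + Wpot N r0 x ^ 2.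
Proof.
  intros HN Hr H0 x. unfold Vpot. rewrite (is_derive_unique _ _ _ (W_der N r0 HN Hr H0 x)). reflexivity.
Qed.

Lemma W_bounds N r0 : nonlinearity N -> (forall x, is_derive r0 x (r0 x * N (r0 x ^ 2))) ->
  r0 0 = 1/2 -> exists Wm Vm, 0 <= Wm /\ 0 <= Vm /\ forall x, Rabs (Wpot N r0 x) <= Wm /\ Rabs (Vpot N r0 x) <= Vm.
Proof.
  intros HN Hr H0.
  destruct (N_bound1 N HN) as [C1 [HC1 HB1]]. destruct (N_bound2 N HN) as [C2 [HC2 HB2]].
  exists (1 + C1), (2 * (2 * C1 + C2) + (1 + C1) ^ 2). split. lra. split.
  { assert (0 <= (1 + C1)^2) by apply pow2_ge_0. nra. }
  intros x. pose proof (s_range N r0 HN Hr H0 x) as Hs.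
  set (s := r0 x ^ 2) in *.
  pose proof (N_pos N s HN ltac:(lra)). pose proof (N_le1 N s HN ltac:(lra)).
  specialize (HB1 s ltac:(lra)). specialize (HB2 s ltac:(lra)).
  apply abs_le_inv in HB1. apply abs_le_inv in HB2.
  assert (HW : Rabs (Wpot N r0 x) <= 1 + C1).
  { unfold Wpot. fold s. apply Rabs_le. split; nra. }
  split; auto.
  rewrite Vpot_eq; auto. unfold Wd. fold s.
  assert (Hwd : Rabs (2 * s * N s * (2 * Derive N s + s * Derive_n N 2 s)) <= 2 * (2 * C1 + C2)).
  { rewrite Rabs_mult. 
    assert (Rabs (2 * s * N s) <= 2) by (apply Rabs_le; split; nra).
    assert (Rabs (2 * Derive N s + s * Derive_n N 2 s) <= 2 * C1 + C2) by (apply Rabs_le; split; nra).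
    apply Rmult_le_compat; auto; apply Rabs_pos. }
  assert (Hw2 : Rabs (Wpot N r0 x ^ 2) <= (1 + C1) ^ 2).
  { rewrite <- RPow_abs. apply pow_incr. split; auto. apply Rabs_pos. }
  eapply Rle_trans. apply Rabs_triang. lra.
Qed.

Definition phi0 (N r0 : R -> R) (x : R) : R := r0 x * sqrt (N (r0 x ^ 2)).

Lemma phi0_der N r0 : nonlinearity N -> (forall x, is_derive r0 x (r0 x * N (r0 x ^ 2))) ->
  r0 0 = 1/2 -> forall x, is_derive (phi0 N r0) x (Wpot N r0 x * phi0 N r0 x).
Proof.
  intros HN Hr H0 x. pose proof (s_range N r0 HN Hr H0 x) as Hs.
  pose proof (N_pos N (r0 x ^ 2) HN ltac:(lra)) as Hn.
  assert (Hd : is_derive (fun t => N (r0 t ^ 2)) x (Derive N (r0 x ^ 2) * (2 * r0 x ^ 2 * N (r0 x ^ 2)))).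
  { apply (comp_der N (fun t => r0 t ^ 2)). apply N_der; auto; lra. apply s_der; auto. }
  pose proof (is_derive_sqrt _ _ _ Hd Hn) as Hq.
  unfold phi0. eapply is_derive_eq. apply prod_der. apply Hr. exact Hq.
  unfold Wpot. cbv beta.
  pose proof (sqrt_lt_R0 _ Hn) as Hqp. pose proof (sqrt_sqrt _ (Rlt_le _ _ Hn)) as Hqq.
  set (q := sqrt (N (r0 x ^ 2))) in *.
  set (n := N (r0 x ^ 2)) in *.
  rewrite <- Hqq. field. lra.
Qed.

Lemma Wphi0_der N r0 : nonlinearity N -> (forall x, is_derive r0 x (r0 x * N (r0 x ^ 2))) ->
  r0 0 = 1/2 -> forall x, is_derive (fun t => Wpot N r0 t * phi0 N r0 t) x (Vpot N r0 x * phi0 N r0 x).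
Proof.
  intros HN Hr H0 x. eapply is_derive_eq. apply prod_der. apply W_der; auto. apply phi0_der; auto.
  rewrite Vpot_eq; auto. ring.
Qed.

Lemma phi0_sq N r0 : nonlinearity N -> (forall x, is_derive r0 x (r0 x * N (r0 x ^ 2))) ->
  r0 0 = 1/2 -> forall x, phi0 N r0 x ^ 2 = r0 x ^ 2 * N (r0 x ^ 2).
Proof.
  intros HN Hr H0 x. pose proof (s_range N r0 HN Hr H0 x) as Hs.
  pose proof (N_pos N (r0 x ^ 2) HN ltac:(lra)) as Hn.
  pose proof (sqrt_sqrt _ (Rlt_le _ _ Hn)) as Hqq. unfold phi0.
  replace ((r0 x * sqrt (N (r0 x ^ 2))) ^ 2) with (r0 x ^ 2 * (sqrt (N (r0 x ^ 2)) * sqrt (N (r0 x ^ 2)))) by ring.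
  rewrite Hqq. reflexivity.
Qed.

Lemma phi0_sq_bounds N r0 : nonlinearity N -> (forall x, is_derive r0 x (r0 x * N (r0 x ^ 2))) ->
  r0 0 = 1/2 -> forall x, 0 < phi0 N r0 x ^ 2 <= 1.
Proof.
  intros HN Hr H0 x. rewrite phi0_sq; auto. pose proof (s_range N r0 HN Hr H0 x) as Hs.
  pose proof (N_pos N (r0 x ^ 2) HN ltac:(lra)) as Hn.
  pose proof (N_le1 N (r0 x ^ 2) HN ltac:(lra)). split. apply Rmult_lt_0_compat; lra. nra.
Qed.


Lemma fp_true {Fa Fb : (R -> Prop) -> Prop} {FFa : Filter Fa} {FFb : Filter Fb} (P : R * R -> Prop) :
  (forall ab, P ab) -> filter_prod Fa Fb P.
Proof.
  intros H. apply (Filter_prod Fa Fb P (fun _ => True) (fun _ => True) filter_true filter_true).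
  intros; apply H.
Qed.

Lemma L2C_phi0 N r0 : nonlinearity N -> (forall x, is_derive r0 x (r0 x * N (r0 x ^ 2))) ->
  r0 0 = 1/2 -> L2C (fun x => RtoC (phi0 N r0 x)).
Proof.
  intros HN Hr H0.
  set (f := fun x => / 2 * r0 x ^ 2).
  assert (Hd : forall x, is_derive f x (phi0 N r0 x ^ 2)).
  { intros x. unfold f. eapply is_derive_eq.
    apply (is_derive_scal (fun t => r0 t ^ 2) x (/2)). apply s_der; auto.
    rewrite phi0_sq; auto. field. }
  assert (HD : forall x, Derive f x = phi0 N r0 x ^ 2) by (intros; apply is_derive_unique; auto).
  assert (Hmono : forall x y, x <= y -> f x <= f y).
  { intros x y Hxy. apply (mono_le f (fun t => phi0 N r0 t ^ 2) x y Hxy). intros; auto.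
    intros; apply pow2_ge_0. }
  destruct (mono_lim_p f (/2) Hmono) as [lb Hlb].
  { intros x. unfold f. pose proof (s_range N r0 HN Hr H0 x). lra. }
  destruct (mono_lim_m f 0 Hmono) as [la Hla].
  { intros x. unfold f. pose proof (s_range N r0 HN Hr H0 x). lra. }
  assert (Hsq : forall x, is_derive (fun t => phi0 N r0 t ^ 2) x (INR 2 * (Wpot N r0 x * phi0 N r0 x) * phi0 N r0 x ^ Init.Nat.pred 2)).
  { intros x. apply is_derive_pow. apply phi0_der; auto. }
  pose proof (is_RInt_gen_Derive (Fa := Rbar_locally m_infty) (Fb := Rbar_locally p_infty) f la lb) as HI.
  exists (lb - la).
  eapply is_RInt_gen_ext. 2: apply HI.
  - apply fp_true. intros ab x _. rewrite HD. rewrite Cmod_R.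
    symmetry; apply pow2_abs.
  - apply fp_true. intros ab x _. eexists; apply Hd.
  - apply fp_true. intros ab x _. apply (continuous_ext (fun t => phi0 N r0 t ^ 2)).
    intros; symmetry; apply HD. apply (der_cont1 _ _ _ (Hsq x)).
  - exact Hla.
  - exact Hlb.
Qed.

Lemma eig_phi0 N r0 : nonlinearity N -> (forall x, is_derive r0 x (r0 x * N (r0 x ^ 2))) ->
  r0 0 = 1/2 -> eigenpair N r0 0%C (fun x => RtoC (phi0 N r0 x)).
Proof.
  intros HN Hr H0. split. apply L2C_phi0; auto. split.
  - exists 0. intros Heq. apply (f_equal fst) in Heq. simpl in Heq.
    pose proof (phi0_sq_bounds N r0 HN Hr H0 0). rewrite Heq in H. lra.
  - exists (fun x => RtoC (Wpot N r0 x * phi0 N r0 x)). intros x. split.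
    + apply is_derive_C_split; simpl. apply phi0_der; auto. apply const_der.
    + apply is_derive_C_split; simpl.
      * eapply is_derive_eq. apply Wphi0_der; auto. ring.
      * eapply is_derive_eq. apply const_der. ring.
Qed.


Lemma sq_der (f : R -> R) x l : is_derive f x l -> is_derive (fun t => f t ^ 2) x (2 * f x * l).
Proof. intros H. eapply is_derive_eq. apply (is_derive_pow f 2 x l H). simpl. ring. Qed.

Lemma dphi_bound (p q p1 q1 p2 q2 S P : R -> R) M L :
  (forall x, is_derive p x (p1 x)) -> (forall x, is_derive q x (q1 x)) ->
  (forall x, is_derive p1 x (p2 x)) -> (forall x, is_derive q1 x (q2 x)) ->
  (forall x, is_derive S x (p x ^ 2 + q x ^ 2)) -> (forall a b, a <= b -> S b - S a <= L) ->
  (forall x, is_derive P x (p1 x ^ 2 + q1 x ^ 2)) ->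
  0 <= M -> (forall x, Rabs (p x * p2 x + q x * q2 x) <= M * (p x ^ 2 + q x ^ 2)) ->
  exists B, forall a b, 0 <= a <= b -> P b - P a <= B.
Proof.
  intros Hp Hq Hp1 Hq1 HS HL HP HM Hb.
  set (K := fun x => p x * p1 x + q x * q1 x).
  set (D := fun x => K x - P x).
  assert (HD : forall x, is_derive D x (p x * p2 x + q x * q2 x)).
  { intros x. unfold D, K. eapply is_derive_eq. apply diff_der. apply sum_der; apply prod_der; auto.
    apply HP. cbv beta. ring. }
  assert (HPm : forall a b, a <= b -> P a <= P b).
  { apply (nonneg_mono P (fun x => p1 x ^ 2 + q1 x ^ 2)); auto. intros; pose proof (pow2_ge_0 (p1 x)); pose proof (pow2_ge_0 (q1 x)); lra. }
  exists (1 - D 0 - P 0 + M * Rabs L).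
  assert (Hmain : forall x, 0 <= x -> P x - P 0 <= 1 - D 0 - P 0 + M * Rabs L).
  { intros x1 Hx1. apply Rnot_lt_le. intros Hgt.
    assert (HK : forall y, x1 <= y -> 1 <= K y).
    { intros y Hy.
      assert (H1 : (fun t => - (M * S t)) y - (fun t => - (M * S t)) 0 <= D y - D 0).
      { apply (comp_le (fun t => - (M * S t)) (fun t => - (M * (p t ^ 2 + q t ^ 2))) D (fun x => p x * p2 x + q x * q2 x) 0 y). lra.
        - intros t _. apply neg_der. apply is_derive_scal. auto.
        - intros t _. auto.
        - intros t _. specialize (Hb t). apply abs_le_inv in Hb. lra. }
      simpl in H1. specialize (HL 0 y ltac:(lra)). pose proof (HPm x1 y Hy).
      unfold D in H1, Hgt. pose proof (Rle_abs L).
      assert (M * L <= M * Rabs L) by (apply Rmult_le_compat_l; auto).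
      assert (M * (S y - S 0) <= M * L) by (apply Rmult_le_compat_l; auto). lra. }
    assert (HF : forall y, x1 + 1 <= y -> 2 <= p y ^ 2 + q y ^ 2).
    { intros y Hy.
      assert (H2 : 2 * y - 2 * x1 <= (p y ^ 2 + q y ^ 2) - (p x1 ^ 2 + q x1 ^ 2)).
      { apply (comp_le (fun t => 2 * t) (fun _ => 2) (fun t => p t ^ 2 + q t ^ 2) (fun t => 2 * K t) x1 y). lra.
        - intros t _. apply is_derive_lin.
        - intros t _. unfold K. eapply is_derive_eq. apply sum_der; apply sq_der; auto. ring.
        - intros t Ht. specialize (HK t ltac:(lra)). lra. }
      pose proof (pow2_ge_0 (p x1)). pose proof (pow2_ge_0 (q x1)). lra. }
    destruct (nlb_right S (fun x => p x ^ 2 + q x ^ 2) 0 L 1 HS) with (X := x1 + 1) as [y [Hy Hy2]].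
    { intros a b Hab. apply HL. lra. } lra.
    specialize (HF y Hy). lra. }
  intros a b Hab. specialize (Hmain b ltac:(lra)). pose proof (HPm 0 a ltac:(lra)). lra.
Qed.

Lemma small_points (p q p1 q1 p2 q2 S : R -> R) M L :
  (forall x, is_derive p x (p1 x)) -> (forall x, is_derive q x (q1 x)) ->
  (forall x, is_derive p1 x (p2 x)) -> (forall x, is_derive q1 x (q2 x)) ->
  (forall x, is_derive S x (p x ^ 2 + q x ^ 2)) -> (forall a b, a <= b -> S b - S a <= L) ->
  0 <= M -> (forall x, Rabs (p x * p2 x + q x * q2 x) <= M * (p x ^ 2 + q x ^ 2)) ->
  (forall eps, 0 < eps -> forall X, exists x, X <= x /\ (p x ^ 2 + q x ^ 2) + (p1 x ^ 2 + q1 x ^ 2) < eps) /\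
  (forall eps, 0 < eps -> forall X, exists x, x <= X /\ (p x ^ 2 + q x ^ 2) + (p1 x ^ 2 + q1 x ^ 2) < eps).
Proof.
  intros Hp Hq Hp1 Hq1 HS HL HM Hb.
  destruct (antider (fun x => p1 x ^ 2 + q1 x ^ 2)) as [P [HP _]].
  { apply (der_cont _ (fun x => 2 * p1 x * p2 x + 2 * q1 x * q2 x)). intros x.
    apply sum_der; apply sq_der; auto. }
  split.
  - destruct (dphi_bound p q p1 q1 p2 q2 S P M L) as [B HB]; auto.
    intros eps Heps X.
    apply (nlb_right (fun x => S x + P x) (fun x => (p x ^ 2 + q x ^ 2) + (p1 x ^ 2 + q1 x ^ 2)) 0 (L + B) eps); auto.
    + intros x. apply sum_der; auto.
    + intros a b Hab. specialize (HB a b Hab). specialize (HL a b ltac:(lra)). lra.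
  - destruct (dphi_bound (fun t => p (-t)) (fun t => q (-t)) (fun t => - p1 (-t)) (fun t => - q1 (-t))
      (fun t => p2 (-t)) (fun t => q2 (-t)) (fun t => - S (-t)) (fun t => - P (-t)) M L) as [B HB]; auto.
    + apply (der_opp_arg p p1 Hp).
    + apply (der_opp_arg q q1 Hq).
    + intros t. eapply is_derive_eq. apply (der_opp_arg (fun y => - p1 y) (fun y => - p2 y)).
      intros y; apply neg_der; auto. ring.
    + intros t. eapply is_derive_eq. apply (der_opp_arg (fun y => - q1 y) (fun y => - q2 y)).
      intros y; apply neg_der; auto. ring.
    + intros t. eapply is_derive_eq. apply (der_opp_arg (fun y => - S y) (fun y => - (p y ^ 2 + q y ^ 2))).
      intros y; apply neg_der; auto. ring.
    + intros a b Hab. specialize (HL (-b) (-a) ltac:(lra)). lra.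
    + intros t. eapply is_derive_eq. apply (der_opp_arg (fun y => - P y) (fun y => - (p1 y ^ 2 + q1 y ^ 2))).
      intros y; apply neg_der; auto. ring.
    + intros eps Heps X.
      apply (nlb_left (fun x => S x + P x) (fun x => (p x ^ 2 + q x ^ 2) + (p1 x ^ 2 + q1 x ^ 2)) 0 (L + B) eps); auto.
      * intros x. apply sum_der; auto.
      * intros a b Hab. specialize (HB (-b) (-a) ltac:(lra)). rewrite !Ropp_involutive in HB.
        specialize (HL a b ltac:(lra)). lra.
Qed.


Lemma Cmod_sq (z : C) : Cmod z ^ 2 = fst z ^ 2 + snd z ^ 2.
Proof.
  unfold Cmod. rewrite pow2_sqrt. reflexivity.
  pose proof (pow2_ge_0 (fst z)); pose proof (pow2_ge_0 (snd z)); lra.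
Qed.

Lemma L2C_S (phi : R -> C) : L2C phi ->
  (forall x, continuous (fun t => fst (phi t) ^ 2 + snd (phi t) ^ 2) x) ->
  exists S L, (forall x, is_derive S x (fst (phi x) ^ 2 + snd (phi x) ^ 2)) /\
              (forall a b, a <= b -> S b - S a <= L).
Proof.
  intros HL Hc.
  destruct (L2_bound (fun x => Cmod (phi x) ^ 2)) as [L HLb]; auto.
  { intros x. apply (continuous_ext (fun t => fst (phi t) ^ 2 + snd (phi t) ^ 2)).
    intros; rewrite Cmod_sq; reflexivity. auto. }
  { intros x. apply pow2_ge_0. }
  destruct (antider _ Hc) as [S [HS HSR]].
  exists S, L. split; auto. intros a b Hab. rewrite HSR.
  rewrite (RInt_ext _ (fun x => Cmod (phi x) ^ 2)). apply HLb; auto.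
  intros; rewrite Cmod_sq; reflexivity.
Qed.

Lemma nonzero_F (z : C) : z <> 0%C -> 0 < fst z ^ 2 + snd z ^ 2.
Proof.
  intros Hz. destruct z as [a b]. simpl.
  destruct (Req_dec a 0); destruct (Req_dec b 0).
  - subst. exfalso. apply Hz. reflexivity.
  - assert (0 < b ^ 2) by (apply pow2_gt_0; auto). pose proof (pow2_ge_0 a). lra.
  - assert (0 < a ^ 2) by (apply pow2_gt_0; auto). pose proof (pow2_ge_0 b). lra.
  - assert (0 < a ^ 2) by (apply pow2_gt_0; auto). pose proof (pow2_ge_0 b). lra.
Qed.

Lemma eig_nonneg N r0 (E : C) phi : nonlinearity N -> (forall x, is_derive r0 x (r0 x * N (r0 x ^ 2))) ->
  r0 0 = 1/2 -> eigenpair N r0 E phi -> Im E = 0 /\ 0 <= Re E.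
Proof.
  intros HN Hr H0 [HL2 [[x0 Hx0] [dphi Hd]]].
  destruct E as [e1 e2]. unfold Im, Re; simpl.
  set (V := Vpot N r0). set (W := Wpot N r0).
  set (p := fun t => fst (phi t)). set (q := fun t => snd (phi t)).
  set (p1 := fun t => fst (dphi t)). set (q1 := fun t => snd (dphi t)).
  set (p2 := fun t => (V t - e1) * p t + e2 * q t).
  set (q2 := fun t => (V t - e1) * q t - e2 * p t).
  assert (Hp : forall x, is_derive p x (p1 x)).
  { intros x. apply (is_derive_C_fst phi x (dphi x)). apply Hd. }
  assert (Hq : forall x, is_derive q x (q1 x)).
  { intros x. apply (is_derive_C_snd phi x (dphi x)). apply Hd. }
  assert (Hp1 : forall x, is_derive p1 x (p2 x)).
  { intros x. eapply is_derive_eq. apply (is_derive_C_fst dphi x). apply Hd.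
    unfold p2, p, q, V. destruct (phi x). simpl. ring. }
  assert (Hq1 : forall x, is_derive q1 x (q2 x)).
  { intros x. eapply is_derive_eq. apply (is_derive_C_snd dphi x). apply Hd.
    unfold q2, p, q, V. destruct (phi x). simpl. ring. }
  set (F := fun t => p t ^ 2 + q t ^ 2).
  assert (HFd : forall x, is_derive F x (2 * p x * p1 x + 2 * q x * q1 x)).
  { intros x. unfold F. apply sum_der; apply sq_der; auto. }
  destruct (L2C_S phi HL2) as [S [L [HS HSL]]].
  { apply (der_cont _ _ HFd). }
  destruct (W_bounds N r0 HN Hr H0) as [Wm [Vm [HWm [HVm HB]]]].
  set (M := Vm + Rabs e1).
  assert (HM : 0 <= M) by (unfold M; pose proof (Rabs_pos e1); lra).
  assert (Hb : forall x, Rabs (p x * p2 x + q x * q2 x) <= M * (p x ^ 2 + q x ^ 2)).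
  { intros x. replace (p x * p2 x + q x * q2 x) with ((V x - e1) * (p x ^ 2 + q x ^ 2)) by (unfold p2, q2; ring).
    rewrite Rabs_mult. rewrite (Rabs_pos_eq (p x ^ 2 + q x ^ 2)).
    2: pose proof (pow2_ge_0 (p x)); pose proof (pow2_ge_0 (q x)); lra.
    apply Rmult_le_compat_r. pose proof (pow2_ge_0 (p x)); pose proof (pow2_ge_0 (q x)); lra.
    unfold M. eapply Rle_trans. apply Rabs_triang. rewrite Rabs_Ropp. destruct (HB x). unfold V. lra. }
  destruct (small_points p q p1 q1 p2 q2 S M L Hp Hq Hp1 Hq1 HS HSL HM Hb) as [Hright Hleft].
  assert (HF0 : 0 < F x0) by (apply nonzero_F; auto).
  assert (HFc : continuous F x0) by (apply (der_cont _ _ HFd)).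
  assert (HFnn : forall x, 0 <= F x).
  { intros x; unfold F; pose proof (pow2_ge_0 (p x)); pose proof (pow2_ge_0 (q x)); lra. }
  set (g := fun t => F t + (p1 t ^ 2 + q1 t ^ 2)).
  assert (Hgr : forall eps, 0 < eps -> forall X, exists x, X <= x /\ g x < eps) by exact Hright.
  assert (Hgl : forall eps, 0 < eps -> forall X, exists x, x <= X /\ g x < eps) by exact Hleft.
  set (Hf := fun t => p t * q1 t - q t * p1 t).
  assert (HHd : forall x, is_derive Hf x (- e2 * F x)).
  { intros x. unfold Hf. eapply is_derive_eq. apply diff_der; apply prod_der; auto.
    unfold p2, q2, F. ring. }
  assert (HHb : forall x, Rabs (Hf x) <= 1 * g x).
  { intros x. unfold Hf, g, F. apply Rabs_le.
    pose proof (pow2_ge_0 (p x - q1 x)). pose proof (pow2_ge_0 (p x + q1 x)).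
    pose proof (pow2_ge_0 (q x - p1 x)). pose proof (pow2_ge_0 (q x + p1 x)). split; nra. }
  assert (I1 : 0 <= - e2).
  { apply (squeeze S F g Hf (fun x => - e2 * F x) x0 1); auto. lra. intros; lra. }
  assert (I2 : 0 <= e2).
  { apply (squeeze S F g (fun t => - Hf t) (fun x => - (- e2 * F x)) x0 1); auto. lra.
    intros x. rewrite Rabs_Ropp. auto. intros x. apply neg_der. auto. intros; lra. }
  split. lra.
  set (T := fun t => - (p t * p1 t + q t * q1 t) + W t * F t).
  set (dT := fun t => - (p1 t * p1 t + p t * p2 t + (q1 t * q1 t + q t * q2 t)) +
                     (Wd N r0 t * F t + W t * (2 * p t * p1 t + 2 * q t * q1 t))).
  assert (HTd : forall x, is_derive T x (dT x)).
  { intros x. unfold T, dT. apply sum_der. apply neg_der. apply sum_der; apply prod_der; auto.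
    apply prod_der. apply W_der; auto. auto. }
  assert (HTle : forall x, dT x <= e1 * F x).
  { intros x. unfold dT, p2, q2, F. unfold V. rewrite Vpot_eq; auto. fold W.
    pose proof (pow2_ge_0 (p1 x - W x * p x)). pose proof (pow2_ge_0 (q1 x - W x * q x)). nra. }
  assert (HTb : forall x, Rabs (T x) <= (1 + Wm) * g x).
  { intros x. unfold T, g.
    assert (Rabs (p x * p1 x + q x * q1 x) <= F x + (p1 x ^ 2 + q1 x ^ 2)).
    { apply Rabs_le. unfold F.
      pose proof (pow2_ge_0 (p x - p1 x)). pose proof (pow2_ge_0 (p x + p1 x)).
      pose proof (pow2_ge_0 (q x - q1 x)). pose proof (pow2_ge_0 (q x + q1 x)). split; nra. }
    assert (Rabs (W x * F x) <= Wm * (F x + (p1 x ^ 2 + q1 x ^ 2))).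
    { rewrite Rabs_mult. rewrite (Rabs_pos_eq (F x)) by auto. destruct (HB x).
      pose proof (pow2_ge_0 (p1 x)). pose proof (pow2_ge_0 (q1 x)). specialize (HFnn x).
      apply Rmult_le_compat; auto. apply Rabs_pos. lra. }
    eapply Rle_trans. apply Rabs_triang. rewrite Rabs_Ropp. lra. }
  apply (squeeze S F g T dT x0 (1 + Wm) e1); auto. lra.
Qed.


Lemma part_i N r0 (lam : C) (U V : R -> C) :
  nonlinearity N ->
  (forall x, is_derive r0 x (r0 x * N (r0 x ^ 2))) ->
  r0 0 = 1 / 2 ->
  L2C U -> L2C V ->
  (exists x, U x <> 0%C \/ V x <> 0%C) ->
  (forall x, is_derive U x (RtoC (Wpot N r0 x) * U x + lam * V x)%C) ->
  (forall x, is_derive V x (lam * U x - RtoC (Wpot N r0 x) * V x)%C) ->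
  (Im (- (lam * lam))%C = 0 /\ eigenpair N r0 (- (lam * lam))%C U).
Proof.
  intros HN Hr H0 HLU HLV [x0 Hx0] HU HV.
  destruct lam as [a b].
  set (W := Wpot N r0).
  set (u1 := fun t => fst (U t)). set (u2 := fun t => snd (U t)).
  set (v1 := fun t => fst (V t)). set (v2 := fun t => snd (V t)).
  assert (Hu1 : forall x, is_derive u1 x (W x * u1 x + (a * v1 x - b * v2 x))).
  { intros x. eapply is_derive_eq. apply (is_derive_C_fst U x). apply HU.
    unfold u1, v1, v2, W. destruct (U x), (V x). simpl. ring. }
  assert (Hu2 : forall x, is_derive u2 x (W x * u2 x + (a * v2 x + b * v1 x))).
  { intros x. eapply is_derive_eq. apply (is_derive_C_snd U x). apply HU.
    unfold u2, v1, v2, W. destruct (U x), (V x). simpl. ring. }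
  assert (Hv1 : forall x, is_derive v1 x (a * u1 x - b * u2 x - W x * v1 x)).
  { intros x. eapply is_derive_eq. apply (is_derive_C_fst V x). apply HV.
    unfold u1, u2, v1, W. destruct (U x), (V x). simpl. ring. }
  assert (Hv2 : forall x, is_derive v2 x (a * u2 x + b * u1 x - W x * v2 x)).
  { intros x. eapply is_derive_eq. apply (is_derive_C_snd V x). apply HV.
    unfold u1, u2, v2, W. destruct (U x), (V x). simpl. ring. }
  set (FU := fun t => u1 t ^ 2 + u2 t ^ 2). set (FV := fun t => v1 t ^ 2 + v2 t ^ 2).
  assert (HFU : forall x, is_derive FU x (2 * u1 x * (W x * u1 x + (a * v1 x - b * v2 x)) + 2 * u2 x * (W x * u2 x + (a * v2 x + b * v1 x)))).
  { intros x. apply sum_der; apply sq_der; auto. }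
  assert (HFV : forall x, is_derive FV x (2 * v1 x * (a * u1 x - b * u2 x - W x * v1 x) + 2 * v2 x * (a * u2 x + b * u1 x - W x * v2 x))).
  { intros x. apply sum_der; apply sq_der; auto. }
  destruct (L2C_S U HLU) as [SU [LU [HSU HSLU]]]. { apply (der_cont _ _ HFU). }
  destruct (L2C_S V HLV) as [SV [LV [HSV HSLV]]]. { apply (der_cont _ _ HFV). }
  set (f := fun t => FU t + FV t).
  assert (HS : forall x, is_derive (fun t => SU t + SV t) x (f x)).
  { intros x. apply sum_der; auto. }
  assert (HSL : forall a0 b0, 0 <= a0 <= b0 \/ a0 <= b0 <= 0 \/ a0 <= b0 -> (SU b0 + SV b0) - (SU a0 + SV a0) <= LU + LV).
  { intros a0 b0 Hab. assert (a0 <= b0) by lra. specialize (HSLU a0 b0 H). specialize (HSLV a0 b0 H). lra. }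
  assert (Hfnn : forall x, 0 <= f x).
  { intros x. unfold f, FU, FV. pose proof (pow2_ge_0 (u1 x)). pose proof (pow2_ge_0 (u2 x)).
    pose proof (pow2_ge_0 (v1 x)). pose proof (pow2_ge_0 (v2 x)). lra. }
  assert (Hgr : forall eps, 0 < eps -> forall X, exists x, X <= x /\ f x < eps).
  { intros eps Heps. apply (nlb_right _ f 0 (LU + LV) eps HS); auto. }
  assert (Hgl : forall eps, 0 < eps -> forall X, exists x, x <= X /\ f x < eps).
  { intros eps Heps. apply (nlb_left _ f 0 (LU + LV) eps HS); auto. }
  assert (Hf0 : 0 < f x0).
  { unfold f, FU, FV, u1, u2, v1, v2. destruct Hx0 as [Hx0 | Hx0].
    - pose proof (nonzero_F _ Hx0). pose proof (pow2_ge_0 (fst (V x0))). pose proof (pow2_ge_0 (snd (V x0))). lra.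
    - pose proof (nonzero_F _ Hx0). pose proof (pow2_ge_0 (fst (U x0))). pose proof (pow2_ge_0 (snd (U x0))). lra. }
  assert (Hfc : continuous f x0).
  { eapply der_cont1. unfold f. apply sum_der; [apply HFU | apply HFV]. }
  set (Rf := fun t => u1 t * v1 t + u2 t * v2 t).
  assert (HRd : forall x, is_derive Rf x (a * f x)).
  { intros x. unfold Rf. eapply is_derive_eq. apply sum_der; apply prod_der; auto.
    unfold f, FU, FV. ring. }
  assert (HRb : forall x, Rabs (Rf x) <= 1 * f x).
  { intros x. unfold Rf, f, FU, FV. apply Rabs_le.
    pose proof (pow2_ge_0 (u1 x - v1 x)). pose proof (pow2_ge_0 (u1 x + v1 x)).
    pose proof (pow2_ge_0 (u2 x - v2 x)). pose proof (pow2_ge_0 (u2 x + v2 x)). split; nra. }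
  assert (A1 : 0 <= a).
  { apply (squeeze _ f f Rf (fun x => a * f x) x0 1 a HS); auto. lra. intros; lra. }
  assert (A2 : 0 <= - a).
  { apply (squeeze _ f f (fun t => - Rf t) (fun x => - (a * f x)) x0 1 (-a) HS); auto. lra.
    intros x. rewrite Rabs_Ropp. auto. intros x. apply neg_der. auto. intros; lra. }
  assert (Ha : a = 0) by lra. subst a.
  split. { simpl. ring. }
  split. exact HLU. split.
  - apply NNPP. intros Hn.
    assert (HU0 : forall x, U x = 0%C).
    { intros x. apply NNPP. intros Hx. apply Hn. exists x. exact Hx. }
    assert (Hu10 : forall x, u1 x = 0) by (intros x; unfold u1; rewrite HU0; reflexivity).
    assert (Hu20 : forall x, u2 x = 0) by (intros x; unfold u2; rewrite HU0; reflexivity).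
    assert (Hb1 : forall x, b * v2 x = 0).
    { intros x. assert (is_derive u1 x 0).
      { apply (is_derive_ext (fun _ => 0)). intros; rewrite Hu10; reflexivity. apply const_der. }
      pose proof (is_derive_unique _ _ _ H). rewrite (is_derive_unique _ _ _ (Hu1 x)) in H1.
      rewrite Hu10 in H1. lra. }
    assert (Hb2 : forall x, b * v1 x = 0).
    { intros x. assert (is_derive u2 x 0).
      { apply (is_derive_ext (fun _ => 0)). intros; rewrite Hu20; reflexivity. apply const_der. }
      pose proof (is_derive_unique _ _ _ H). rewrite (is_derive_unique _ _ _ (Hu2 x)) in H1.
      rewrite Hu20 in H1. lra. }
    assert (HFV0 : 0 < FV x0).
    { destruct Hx0 as [Hx0 | Hx0]. exfalso; apply Hx0; apply HU0. apply (nonzero_F _ Hx0). }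
    assert (Hb : b = 0).
    { assert (b ^ 2 * FV x0 = 0).
      { unfold FV. replace (b ^ 2 * (v1 x0 ^ 2 + v2 x0 ^ 2)) with ((b * v1 x0) ^ 2 + (b * v2 x0) ^ 2) by ring.
        rewrite Hb1, Hb2. ring. }
      apply Rmult_integral in H. destruct H. destruct (Req_dec b 0); auto. exfalso; apply (pow_nonzero b 2); auto. lra. }
    subst b.
    set (ph := phi0 N r0).
    assert (Hc1 : forall x y, v1 x * ph x = v1 y * ph y).
    { apply const_der0. intros x. eapply is_derive_eq. apply prod_der. apply Hv1. apply phi0_der; auto.
      rewrite Hu10, Hu20. fold W. unfold ph. ring. }
    assert (Hc2 : forall x y, v2 x * ph x = v2 y * ph y).
    { apply const_der0. intros x. eapply is_derive_eq. apply prod_der. apply Hv2. apply phi0_der; auto.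
      rewrite Hu10, Hu20. fold W. unfold ph. ring. }
    set (c := FV x0 * ph x0 ^ 2).
    assert (Hcp : 0 < c). { unfold c. apply Rmult_lt_0_compat; auto. apply phi0_sq_bounds; auto. }
    assert (HFVc : forall x, c <= FV x).
    { intros x. assert (FV x * ph x ^ 2 = c).
      { unfold c, FV. replace ((v1 x ^ 2 + v2 x ^ 2) * ph x ^ 2) with ((v1 x * ph x) ^ 2 + (v2 x * ph x) ^ 2) by ring.
        rewrite (Hc1 x x0), (Hc2 x x0). ring. }
      pose proof (phi0_sq_bounds N r0 HN Hr H0 x). fold ph in H1.
      assert (0 <= FV x) by (unfold FV; pose proof (pow2_ge_0 (v1 x)); pose proof (pow2_ge_0 (v2 x)); lra).
      nra. }
    assert (Hn' : forall X, exists x, X <= x /\ FV x < c).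
    { apply (nlb_right SV FV 0 LV c HSV). intros a0 b0 Hab. apply HSLV. lra. exact Hcp. }
    destruct (Hn' 0) as [y [_ Hy]].
    specialize (HFVc y). lra.
  - exists (fun x => (RtoC (W x) * U x + (0, b) * V x)%C). intros x. split.
    + apply HU.
    + apply is_derive_C_split.
      * apply (is_derive_ext (fun t => W t * u1 t + (0 * v1 t - b * v2 t))).
        { intros t. unfold u1, v1, v2. destruct (U t), (V t). simpl. ring. }
        eapply is_derive_eq. apply sum_der. apply prod_der. apply W_der; auto. apply Hu1.
        apply diff_der; apply is_derive_scal; auto.
        unfold u1, u2, v1, v2. fold W. destruct (U x), (V x). simpl. rewrite Vpot_eq; auto. fold W. ring.
      * apply (is_derive_ext (fun t => W t * u2 t + (0 * v2 t + b * v1 t))).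
        { intros t. unfold u2, v1, v2. destruct (U t), (V t). simpl. ring. }
        eapply is_derive_eq. apply sum_der. apply prod_der. apply W_der; auto. apply Hu2.
        apply sum_der; apply is_derive_scal; auto.
        unfold u1, u2, v1, v2. fold W. destruct (U x), (V x). simpl. rewrite Vpot_eq; auto. fold W. ring.
Qed.

Theorem lemma8p5 (N r0 : R -> R) (lam : C) (U V : R -> C) :
  nonlinearity N ->
  (forall x, is_derive r0 x (r0 x * N (r0 x ^ 2))) ->
  r0 0 = 1 / 2 ->
  L2C U -> L2C V ->
  (exists x, U x <> 0%C \/ V x <> 0%C) ->
  (forall x, is_derive U x (RtoC (Wpot N r0 x) * U x + lam * V x)%C) ->
  (forall x, is_derive V x (lam * U x - RtoC (Wpot N r0 x) * V x)%C) ->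
  (* (i) *)
  (Im (- (lam * lam))%C = 0 /\ eigenpair N r0 (- (lam * lam))%C U) /\
  (* (ii) E = 0 is the lowest eigenvalue *)
  ((exists phi, eigenpair N r0 0%C phi) /\
   (forall (E : C) phi, eigenpair N r0 E phi -> Im E = 0 /\ 0 <= Re E)).
Proof.
  intros HN Hr H0 HLU HLV Hx HU HV. split.
  - apply (part_i N r0 lam U V); auto.
  - split.
    + exists (fun x => RtoC (phi0 N r0 x)). apply eig_phi0; auto.
    + intros E phi He. apply (eig_nonneg N r0 E phi); auto.
Qed.
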